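(* Let $s\geq 1$ and $t\geq 3$ be integers. Let $G$ be a bipartite graph with bipartition $A\cup B$, $|B|=n$, which contains no copy of $L'_{s,t}$ as a subgraph, and suppose that $W(A)\geq 8(s+t)^2 n$. Then the number of light edges in $W_G$ (i.e. the number of unordered pairs of distinct vertices of $A$ forming a light edge) is at least $\frac{W(A)}{4(s+t)^3}$.
   Context: For a bipartite graph $G$ with bipartition $A\cup B$, write $d_G(u,v)=|N_G(u)\cap N_G(v)|$ for $u,v\in A$, where $N_G(x)$ is the neighbourhood of $x$ in $G$. The neighbourhood graph $W_G$ is the weighted graph on $A$ where the pair $uv$ has weight $d_G(u,v)$. For $U\subseteq A$, $W(U)=\sum_{\{u,v\}\in\binom{U}{2}} d_G(u,v)$. A pair $uv$ of distinct vertices of $A$ is a light edge if $1\leq d_G(u,v)<\binom{s+t-1}{2}$ and a heavy edge if $d_G(u,v)\geq\binom{s+t-1}{2}$. The subdivision of a graph $L$ is the bipartite graph with parts $V(L)$ and $E(L)$ in which $v\in V(L)$ is adjacent to $e\in E(L)$ iff $v$ is an endpoint of $e$. $L_{s,t}$ is the graph on vertex set $S\cup T$, $S\cap T=\emptyset$, $|S|=s$, $|T|=t-1$, where distinct $x,y$ are adjacent iff $x\in T$ or $y\in T$; $L'_{s,t}$ is its subdivision. *)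

(* Defs.v *)
From mathcomp Require Import all_boot.
Set Implicit Arguments. Unset Strict Implicit. Unset Printing Implicit Defensive.

Definition bip_graph (VA VB : finType) (adj : VA -> VB -> bool)
    (x y : (VA + VB)%type) : bool :=
  match x, y with
  | inl a, inr b => adj a b
  | inr b, inl a => adj a b
  | _, _ => false
  end.

(* codegree of a pair of A-vertices, given as a 2-element set P:
   d_G(u,v) = |N(u) ∩ N(v)| for P = {u,v}. *)
Definition codeg (VA VB : finType) (adj : VA -> VB -> bool) (P : {set VA}) : nat :=
  #|[set b : VB | [forall u in P, adj u b]]|.

Definition Wsum (VA VB : finType) (adj : VA -> VB -> bool) : nat :=
  \sum_(P : {set VA} | #|P| == 2) codeg adj P.

Definition light_edges (s t : nat) (VA VB : finType) (adj : VA -> VB -> bool)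
    : {set {set VA}} :=
  [set P : {set VA} | (#|P| == 2) && (1 <= codeg adj P) && (codeg adj P < 'C(s + t - 1, 2))].

(* L_{s,t}: vertex set S ∪ T with |S| = s, |T| = t-1; x,y adjacent iff x ≠ y
   and (x ∈ T or y ∈ T). S = inl part, T = inr part. *)
Definition Lvert (s t : nat) : finType := ('I_s + 'I_(t - 1))%type.

Definition inT (s t : nat) (x : Lvert s t) : bool :=
  match x with inl _ => false | inr _ => true end.

Definition Ladj (s t : nat) (x y : Lvert s t) : bool :=
  (x != y) && (inT x || inT y).

Definition Ledges (s t : nat) : {set {set Lvert s t}} :=
  [set e : {set Lvert s t} | [exists x, exists y, Ladj x y && (e == [set x; y])]].

(* G contains a copy of the subdivision L'_{s,t} (vertex set V(L) ∪ E(L),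
   v ~ e iff v ∈ e) as a (not necessarily induced) subgraph: an injective map
   of V(L) ∪ E(L) into V(G) = A ∪ B sending edges of L'_{s,t} to edges of G. *)
Definition contains_Lprime (s t : nat) (VA VB : finType) (adj : VA -> VB -> bool)
    : Prop :=
  exists (f : Lvert s t -> (VA + VB)%type) (g : {set Lvert s t} -> (VA + VB)%type),
    [/\ injective f,
        {in Ledges s t &, injective g},
        (forall x e, e \in Ledges s t -> f x != g e) &
        (forall x e, e \in Ledges s t -> x \in e -> bip_graph adj (f x) (g e))].

(* Main.v *)
Require Import Defs.
From mathcomp Require Import all_boot.
From mathcomp Require Import zify.
Set Implicit Arguments. Unset Strict Implicit.


Definition dg (T : finType) (rr : rel T) (X : {set T}) x := #|[set y in X | rr x y]|.
Definition DD (T : finType) (rr : rel T) (X : {set T}) := \sum_(x in X) dg rr X x.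

Lemma turan (T : finType) (rr : rel T) (rr_refl : reflexive rr) (rr_sym : symmetric rr) k (X : {set T}) :
  (forall Y : {set T}, Y \subset X -> #|Y| = k ->
     exists x y, [/\ x \in Y, y \in Y, x != y & rr x y]) ->
  #|X| ^ 2 <= k * DD rr X.
Proof.
elim: k X => [|k IH] X H.
  have [x [y [] ]] := H set0 (sub0set _) (cards0 _).
  by rewrite in_set0.
case: (set_0Vmem X) => [->|[x0 x0X]]; first by rewrite cards0.
pose v := [arg min_(v < x0 in X) dg rr X v].
have [vX vmin] : v \in X /\ forall x, x \in X -> dg rr X v <= dg rr X x.
  by rewrite /v; case: arg_minnP => // w wX wm; split.
pose N := [set y in X | rr v y].
pose Y := X :\: N.
have NX : N \subset X by apply/subsetP => y; rewrite inE => /andP[].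
have vN : v \in N by rewrite inE vX rr_refl.
have YX : Y \subset X by apply: subsetDl.
have IHY := IH Y.
have HY : #|Y| ^ 2 <= k * DD rr Y.
  apply: IH => Y' Y'Y cY'.
  have vY' : v \notin Y'.
    apply/negP => /(subsetP Y'Y); by rewrite inE vN.
  have [x [y [xin yin xy rxy]]] : exists x y, [/\ x \in v |: Y', y \in v |: Y', x != y & rr x y].
    apply: H; last by rewrite cardsU1 vY' cY'.
    rewrite subUset sub1set vX /=; exact: subset_trans Y'Y YX.
  move: xin yin; rewrite !in_setU1.
  case/orP=> [/eqP xv|xY]; case/orP=> [/eqP yv|yY].
  - by move: xy; rewrite xv yv eqxx.
  - exfalso; have := subsetP Y'Y _ yY; rewrite !inE -xv rxy andbT.
    by move: (subsetP YX _ (subsetP Y'Y _ yY)) => ->.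
  - exfalso; have := subsetP Y'Y _ xY; rewrite !inE -yv rr_sym rxy andbT.
    by move: (subsetP YX _ (subsetP Y'Y _ xY)) => ->.
  - by exists x, y.
set a := #|N|.
have cX : #|X| = a + #|Y|.
  rewrite cardsD (setIidPr NX) || rewrite cardsD setIC (setIidPr NX).
  have := subset_leq_card NX; rewrite /a; lia.
have DX : a * a + DD rr Y <= DD rr X.
  rewrite [DD rr X](big_setID N) /= (setIidPr NX) -/Y.
  apply: leq_add.
    rewrite -[a * a]sum_nat_const /=; rewrite -/a.
    apply: leq_sum => x xN; apply: vmin; exact: subsetP NX _ xN.
  apply: leq_sum => x _; apply: subset_leq_card; apply/subsetP => y.
  by rewrite !inE => /andP[] /andP[? ?] ->; rewrite andbT.
rewrite cX.
set e := #|Y| in HY *.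
set dy := DD rr Y in HY DX *.
set dx := DD rr X in DX *.
case: k {IH H IHY} HY => [|k] HY.
  have -> : e = 0 by move: HY; rewrite mul0n leqn0 expn_eq0 => /andP[/eqP].
  nia.
have am : 2 * (k.+1 * a) * e <= (k.+1 * a) ^ 2 + e ^ 2.
  move: (k.+1 * a) => x.
  case: (leqP x e) => [/subnKC <-|/ltnW/subnKC <-]; nia.
nia.
Qed.


Lemma sdr (I J : finType) (j0 : J) (S : I -> {set J}) (l : seq I) :
  uniq l -> (forall i, i \in l -> size l <= #|S i|) ->
  exists g : I -> J, {in l &, injective g} /\ (forall i, i \in l -> g i \in S i).
Proof.
elim: l => [|i l IH] /=.
  by move=> _ _; exists (fun _ => j0); split.
move=> /andP[il ul] HS.
have [g [ginj gS]] : exists g : I -> J, {in l &, injective g} /\ (forall i, i \in l -> g i \in S i).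
  apply: IH => // j jl; apply: leq_trans (HS j _); first exact: leqnSn.
  by rewrite inE jl orbT.
have cim : #|[set g j | j in l]| <= size l.
  by apply: leq_trans (leq_imset_card _ _) _; rewrite (card_uniqP ul).
have : 0 < #|S i :\: [set g j | j in l]|.
  rewrite cardsD.
  have := HS i (mem_head _ _); have := subset_leq_card (subsetIr (S i) [set g j | j in l]).
  simpl in *; lia.
case/card_gt0P => b; rewrite inE => /andP[bim bS].
exists (fun j => if j == i then b else g j); split.
  move=> x y; rewrite !inE.
  case: (eqVneq x i) => [->|xi]; case: (eqVneq y i) => [->|yi] //= Hx Hy.
  - move=> E; exfalso; move/negP: bim; apply; rewrite E; exact: imset_f.
  - move=> E; exfalso; move/negP: bim; apply; rewrite -E; exact: imset_f.
  - exact: ginj.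
move=> j; rewrite inE; case: (eqVneq j i) => [-> //|_ /= jl]; exact: gS.
Qed.


Lemma forall_set2 (T : finType) (P : pred T) p q :
  [forall u in [set p; q], P u] = P p && P q.
Proof.
apply/forall_inP/andP => [H|[Hp Hq] u].
  by split; apply: H; rewrite !inE eqxx ?orbT.
by rewrite !inE => /orP[] /eqP ->.
Qed.

Lemma codeg2 (VA VB : finType) (adj : VA -> VB -> bool) u v :
  codeg adj [set u; v] = #|[set b | adj u b && adj v b]|.
Proof.
rewrite /codeg; apply: eq_card => b; by rewrite !inE forall_set2.
Qed.

Lemma embed s t (VA VB : finType) (adj : VA -> VB -> bool) (Y : {set VA}) (b0 : VB) :
  1 <= t -> #|Y| = s + t - 1 ->
  (forall x y, x \in Y -> y \in Y -> x != y -> 'C(s + t - 1, 2) <= codeg adj [set x; y]) ->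
  contains_Lprime s t adj.
Proof.
move=> t1 cY heavy.
have E : #|Lvert s t| = #|Y| by rewrite card_sum !card_ord cY; lia.
pose h (x : Lvert s t) : VA := enum_val (cast_ord E (enum_rank x)).
have hinj : injective h.
  by move=> x y /enum_val_inj /cast_ord_inj /enum_rank_inj.
have hY x : h x \in Y by exact: enum_valP.
pose S (e : {set Lvert s t}) := [set b | [forall x in e, adj (h x) b]].
have cL : #|Ledges s t| <= 'C(s + t - 1, 2).
  have -> : s + t - 1 = #|Lvert s t| by rewrite card_sum !card_ord; lia.
  rewrite -card_draws; apply: subset_leq_card; apply/subsetP => e.
  rewrite !inE => /existsP[x] /existsP[y] /andP[/andP[xy _] /eqP ->].
  by rewrite cards2 xy.
have [g [ginj gS]] : exists g, {in enum (Ledges s t) &, injective g} /\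
     (forall e, e \in enum (Ledges s t) -> g e \in S e).
  apply: (sdr b0); first exact: enum_uniq.
  move=> e; rewrite mem_enum -cardE inE => /existsP[x] /existsP[y] /andP[/andP[xy _] /eqP ->].
  apply: (leq_trans cL).
  have -> : #|S [set x; y]| = codeg adj [set h x; h y].
    rewrite codeg2; apply: eq_card => b; by rewrite !inE forall_set2.
  apply: heavy => //; by rewrite (inj_eq hinj).
exists (fun x => inl (h x)), (fun e => inr (g e)); split.
- by move=> x y [] /hinj.
- by move=> e e' He He' [] /ginj; apply; rewrite mem_enum.
- by [].
- move=> x e He xe /=.
  have := gS e; rewrite mem_enum => /(_ He); rewrite inE => /forall_inP; exact.
Qed.


Lemma set2_eq (T : finType) (u v a b : T) : u != v -> a != b ->
  ([set u; v] == [set a; b]) = ((u, v) == (a, b)) || ((u, v) == (b, a)).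
Proof.
move=> uv ab; apply/eqP/orP => [E|[]/eqP[-> ->]]; last 2 first.
- by []. 
- by rewrite setUC.
have ua : u \in [set a; b] by rewrite -E !inE eqxx.
have va : v \in [set a; b] by rewrite -E !inE eqxx orbT.
move: ua va uv; rewrite !inE => /orP[]/eqP-> /orP[]/eqP->; rewrite ?eqxx //; by auto.
Qed.

Lemma sum_pairs (T : finType) (F : {set T} -> nat) :
  \sum_(P : {set T} | #|P| == 2) F P * 2 = \sum_u \sum_(v | v != u) F [set u; v].
Proof.
rewrite pair_big_dep /=.
rewrite (partition_big (fun p : T * T => [set p.1; p.2]) (fun P : {set T} => #|P| == 2)) /=; last first.
  by case=> u v /= vu; rewrite cards2 (eq_sym u) vu.
apply: eq_bigr => P /cards2P [a [b [ab ->]]].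
rewrite (eq_bigr (fun _ => F [set a; b])); last by move=> p /andP[_ /eqP ->].
rewrite sum_nat_const mulnC; congr (_ * _).
have -> : 2 = ((a, b) != (b, a)).+1 by rewrite xpair_eqE negb_and ab.
rewrite -(card2 (a, b) (b, a)).
apply: eq_card => -[u v]; rewrite [in RHS]unfold_in /= !inE.
case: (eqVneq v u) => [->|vu] /=.
  rewrite !xpair_eqE; apply/negbTE; apply/negP => /orP[] /andP[/eqP e1 /eqP e2]; by move: ab; rewrite -e1 -e2 eqxx.
by rewrite set2_eq // eq_sym.
Qed.

Lemma card_bool (T : finType) (P : pred T) : #|[set x | P x]| = \sum_x (P x : nat).
Proof. rewrite -sum1_card big_mkcond; apply: eq_bigr => x _; rewrite inE; by case: (P x). Qed.

Lemma bin2_mul K : 2 * 'C(K, 2) = K * (K - 1).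
Proof. elim: K => // n IH; rewrite binS bin1 mulnDr IH; nia. Qed.

Lemma dcount (VA VB : finType) (adj : VA -> VB -> bool) (q : rel VA) :
  \sum_b \sum_(u in [set a | adj a b]) #|[set v in [set a | adj a b] | q u v]| =
  \sum_u \sum_v (if q u v then #|[set b | adj u b && adj v b]| else 0).
Proof.
under eq_bigr => b _.
  rewrite big_mkcond /=.
  under eq_bigr => u _.
    rewrite inE card_bool.
    have -> : (if adj u b then \sum_v ((v \in [set a | adj a b]) && q u v : nat) else 0)
        = \sum_v (adj u b && adj v b && q u v : nat).
      case: (adj u b) => /=; first by apply: eq_bigr => v _; rewrite inE.
      by rewrite big1.
  over.
over.
rewrite exchange_big; apply: eq_bigr => u _.
rewrite exchange_big; apply: eq_bigr => v _.
rewrite card_bool; case: (q u v) => /=; last by rewrite big1 // => b _; rewrite andbF.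
by apply: eq_bigr => b _; rewrite andbT.
Qed.

Lemma dsplit (VA VB : finType) (adj : VA -> VB -> bool) (q : rel VA) :
  (forall u, q u u) ->
  \sum_u \sum_v (if q u v then #|[set b | adj u b && adj v b]| else 0) =
  \sum_b #|[set a | adj a b]| +
  \sum_u \sum_(v | v != u) (if q u v then codeg adj [set u; v] else 0).
Proof.
move=> qrefl.
have -> : \sum_b #|[set a | adj a b]| = \sum_u #|[set b | adj u b && adj u b]|.
  under eq_bigr => b _ do rewrite card_bool.
  rewrite exchange_big; apply: eq_bigr => u _; rewrite card_bool.
  by apply: eq_bigr => b _; rewrite andbb.
rewrite -big_split; apply: eq_bigr => u _.
rewrite (bigD1 u) //= qrefl; congr (_ + _).
by apply: eq_bigr => v _; rewrite codeg2.
Qed.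

Theorem lemma10 (s t n : nat) (VA VB : finType) (adj : VA -> VB -> bool) :
  1 <= s -> 3 <= t ->
  #|VB| = n ->
  ~ contains_Lprime s t adj ->
  8 * (s + t) ^ 2 * n <= Wsum adj ->
  Wsum adj <= 4 * (s + t) ^ 3 * #|light_edges s t adj|.
Proof.
move=> s1 t3 cB noL HW.
set K := s + t - 1.
set c := 'C(K, 2).
set X := fun b => [set a | adj a b].
pose rr : rel VA := fun u v => (u == v) || (codeg adj [set u; v] < c).
have rr_refl : reflexive rr by move=> u; rewrite /rr eqxx.
have rr_sym : symmetric rr by move=> u v; rewrite /rr eq_sym setUC.
set W := Wsum adj.
set L := #|light_edges s t adj|.
set LW := \sum_(P : {set VA} | #|P| == 2) (if codeg adj P < c then codeg adj P else 0).
set Sd := \sum_b #|X b|.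
set S2 := \sum_b #|X b| ^ 2.
set SD := \sum_b DD rr (X b).
have eS2 : S2 = Sd + 2 * W.
  have -> : S2 = \sum_b \sum_(u in X b) #|[set v in X b | xpredT v]|.
    apply: eq_bigr => b _.
    have -> : [set v in X b | xpredT v] = X b by apply/setP => v; rewrite !inE andbT.
    by rewrite sum_nat_const expnS expn1.
  rewrite (dcount adj (fun _ _ => true)) (@dsplit _ _ adj (fun _ _ => true)) //.
  congr (_ + _); rewrite /W /Wsum mulnC big_distrl /= sum_pairs.
  by apply: eq_bigr.
have eSD : SD = Sd + 2 * LW.
  rewrite /SD /DD /dg (dcount adj rr) (@dsplit _ _ adj rr) //.
  congr (_ + _); rewrite /LW mulnC big_distrl /= sum_pairs.
  apply: eq_bigr => u _; apply: eq_bigr => v vu.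
  by rewrite /rr eq_sym (negbTE vu).
have F2 : S2 <= K * SD.
  rewrite /SD big_distrr /=; apply: leq_sum => b _.
  apply: turan => // Y YX cY.
  case: (boolP [exists x in Y, exists y in Y, (x != y) && rr x y]).
    by case/exists_inP => x xY /exists_inP [y yY /andP [xy rxy]]; exists x, y.
  move=> Hn; exfalso; apply: noL.
  apply: (embed (Y := Y) b) => //; first by lia.
  move=> x y xY yY xy; rewrite leqNgt; apply/negP => lt.
  move/negP: Hn; apply; apply/exists_inP; exists x => //; apply/exists_inP; exists y => //.
  by rewrite xy /rr lt orbT.
have F3 : 2 * (s + t) * Sd <= S2 + 4 * (s + t) ^ 2 * n.
  rewrite /Sd /S2 big_distrr /= -cB (mulnC _ #|VB|) -sum_nat_const -big_split /=.
  apply: leq_sum => b _; move: #|X b| => d; nia.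
have F1 : LW <= c * L.
  rewrite /LW /L -sum1_card big_distrr /= big_mkcond [X in _ <= X]big_mkcond /=.
  apply: leq_sum => P _; rewrite inE.
  case: (#|P| == 2) => //=.
  case: (ltnP (codeg adj P) c) => // lt.
  case: (posnP (codeg adj P)) => [->|pos] //.
  by rewrite /= muln1 ltnW.
have c2 : 2 * c = K * (K - 1) by apply: bin2_mul.
have NK : s + t = K + 1 by rewrite /K; lia.
rewrite NK in F3 HW *.
have K3 : 3 <= K by rewrite /K; lia.
rewrite -/W in HW.
clearbody K c W L LW Sd S2 SD.
rewrite eS2 eSD in F2; rewrite eS2 in F3.
have A : 4 * (K + 1) * Sd <= 2 * Sd + 5 * W.
  have : 4 * (K + 1) * Sd <= 2 * Sd + 4 * W + 8 * (K + 1) ^ 2 * n by nia.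
  move: HW; move: (8 * (K + 1) ^ 2 * n) (4 * (K + 1) * Sd) => x y; lia.
have B : 2 * W <= (K - 1) * Sd + 2 * K * LW.
  move: F2; rewrite mulnDr; have -> : K * Sd = Sd + (K - 1) * Sd by nia.
  nia.
have C : 3 * W <= 8 * K * LW.
  have : 4 * (K - 1) * Sd + 8 * Sd = 4 * (K + 1) * Sd by nia.
  nia.
have D : 8 * K * LW <= 4 * (K * (K * (K - 1))) * L.
  rewrite -c2; have := leq_mul (leqnn (8 * K)) F1; nia.
have E : K * (K * (K - 1)) <= (K + 1) ^ 3.
  have : K * (K - 1) <= K * K by apply: leq_mul => //; apply: leq_subr.
  nia.
have := leq_mul (leqnn 4) (leq_mul E (leqnn L)).
nia.
Qed.
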